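(* Let $n,t \ge 1$ be integers, and let $G$ be a simple graph on $n$ vertices such that no forest on $2t+1$ vertices is an induced subgraph of $G$. Then $|E(G)| \ge g(n,t)$. If equality holds and $n < 4t$, then every component of $G$ is a complete graph on $1$, $3$ or $4$ vertices. If equality holds and $n \ge 4t$, then $G \cong G_{n,t}$.
   Context: The function $g:\mathbb{N}\times\mathbb{N}\to\mathbb{N}$ is defined recursively by: $g(n,t) = 0$ for $n < 2t$; $g(n,t) = 3(n-2t)$ for $2t \le n \le 4t$; and $g(n,t) = g(n-1,t) + \lceil n/t \rceil - 1$ for $n > 4t$. $G_{n,t}$ denotes the graph on $n$ vertices which is a disjoint union of $t$ complete graphs whose numbers of vertices pairwise differ by at most one. *)

(* Defs.v *)
From mathcomp Require Import all_boot.
Set Implicit Arguments. Unset Strict Implicit. Unset Printing Implicit Defensive.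

(* g(n,t): g(n,t) = 0 for n < 2t; 3(n-2t) for 2t <= n <= 4t;
   g(n-1,t) + ceil(n/t) - 1 for n > 4t.  ceil(n/t) = (n + t - 1) %/ t (t >= 1). *)
Fixpoint g (n t : nat) : nat :=
  match n with
  | 0 => 0
  | m.+1 =>
      if m.+1 < 2 * t then 0
      else if m.+1 <= 4 * t then 3 * (m.+1 - 2 * t)
      else g m t + ((m.+1 + t - 1) %/ t - 1)
  end.

(* A simple graph is a symmetric irreflexive relation e on a finType T. *)

Definition nedges (T : finType) (e : rel T) : nat :=
  #|[set A : {set T} | [exists x, exists y, e x y && (A == [set x; y])]]|.

Definition induced_forest (T : finType) (e : rel T) (S : {set T}) : Prop :=
  forall c : seq T, all (fun x => x \in S) c -> uniq c -> 2 < size c ->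
    ~~ cycle e c.

Definition has_induced_forest (T : finType) (e : rel T) (k : nat) : Prop :=
  exists S : {set T}, #|S| = k /\ induced_forest e S.

Definition clique (T : finType) (e : rel T) (S : {set T}) : Prop :=
  forall x y, x \in S -> y \in S -> x != y -> e x y.

Definition component (T : finType) (e : rel T) (x : T) : {set T} :=
  [set y | connect e x y].

(* G_{n,t}: vertices 0..n-1, two distinct vertices adjacent iff congruent
   mod t; the residue classes have sizes floor(n/t) or ceil(n/t), so this
   is the disjoint union of t complete graphs whose orders differ by <= 1. *)
Definition Gnt (n t : nat) : rel 'I_n :=
  fun i j => (i != j) && (i %% t == j %% t).

Definition graph_iso (T T' : finType) (e : rel T) (e' : rel T') : Prop :=
  exists f : T -> T', bijective f /\ forall x y, e x y = e' (f x) (f y).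
Arguments Gnt : clear implicits.

(* Main.v *)
Require Import Defs.
From mathcomp Require Import all_boot all_order all_algebra.
From mathcomp Require Import ring lra zify.
Set Implicit Arguments. Unset Strict Implicit. Unset Printing Implicit Defensive.
Import Order.TTheory GRing.Theory Num.Theory.

Section Part1.
Variables (T : finType) (e : rel T).
Hypotheses (esym : symmetric e) (eirr : irreflexive e).

Lemma cycle_nbrs (c : seq T) w : uniq c -> 2 < size c -> cycle e c -> w \in c ->
  exists x y, [/\ x \in c, y \in c, x != y, x != w & y != w] /\ e w x /\ e w y.
Proof.
move=> uc sc cc wc.
case: (rot_to wc) => i s' Hr.
have uc' : uniq (w :: s') by rewrite -Hr rot_uniq.
have cc' : cycle e (w :: s') by rewrite -Hr rot_cycle.
have sc' : 2 < size (w :: s') by rewrite -Hr size_rot.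
have memc z : z \in w :: s' -> z \in c by rewrite -Hr mem_rot.
case: s' Hr uc' cc' sc' memc => [|x s1] // _ uc' cc' sc' memc.
case/lastP: s1 uc' cc' sc' memc => [|s2 y] // uc' cc' sc' memc.
move: cc'; rewrite /= rcons_path => /and3P [ewx _].
rewrite last_rcons => eyw.
move: uc' => /= /andP [wn /andP [xn _]].
have wx : w != x by apply: contraNneq wn => ->; rewrite mem_head.
have wy : w != y by apply: contraNneq wn => ->; rewrite inE mem_rcons mem_head orbT.
have xy : x != y by apply: contraNneq xn => ->; rewrite mem_rcons mem_head.
exists x, y; split; last by split => //; rewrite esym.
split.
- by apply: memc; rewrite inE mem_head orbT.
- by apply: memc; rewrite inE inE mem_rcons mem_head !orbT.
- by [].
- by rewrite eq_sym.
- by rewrite eq_sym.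
Qed.

Lemma forest_sub (S S' : {set T}) : S' \subset S -> induced_forest e S -> induced_forest e S'.
Proof.
move=> sub fS c allc uc sc; apply: fS => //.
apply/allP => x xc; apply: (subsetP sub); exact: (allP allc).
Qed.

Lemma forest_ext (F : {set T}) w : induced_forest e F ->
  #|[set v in F | e w v]| <= 1 -> induced_forest e (w |: F).
Proof.
move=> fF dw c allc uc sc; apply/negP => cc.
case wc: (w \in c).
- have [x [y [[xc yc xy xw yw] [ewx ewy]]]] := cycle_nbrs uc sc cc wc.
  have xF : x \in F by move: (allP allc x xc); rewrite !inE (negbTE xw).
  have yF : y \in F by move: (allP allc y yc); rewrite !inE (negbTE yw).
  have : [set x; y] \subset [set v in F | e w v].
    by apply/subsetP => z; rewrite !inE => /orP [] /eqP ->; rewrite ?xF ?yF ?ewx ?ewy.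
  move/subset_leq_card; rewrite cards2 xy => /leq_trans/(_ dw).
  by [].
- have : all (fun x => x \in F) c.
    apply/allP => z zc; move: (allP allc z zc); rewrite !inE.
    by case: eqP => [ezw |] //; rewrite ezw wc in zc.
  by move/(fF c)/(_ uc sc); rewrite cc.
Qed.

End Part1.

Section Wrap2.
Local Open Scope ring_scope.

Definition cw (d : nat) : rat := if (d <= 1)%N then 1%R else (2 / (d.+1)%:R)%R.



Lemma two_div_mul (n : nat) : (0 < n)%N -> (2 / n%:R : rat) *+ n = 2.
Proof. by move=> n0; rewrite -[_ *+ n]mulr_natr divfK // pnatr_eq0 -lt0n. Qed.

Lemma cw_step d : cw d *+ d.+1 <= cw d.-1 *+ d + ((d <= 1)%N : nat)%:R.
Proof.
case: d => [|[|[|d]]].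
- rewrite /cw [(0 <= 1)%N]/= !mulr1n mulr0n add0r; exact: lexx.
- rewrite /cw [(1 <= 1)%N]/= [(0 <= 1)%N]/= mulr1n; exact: lexx.
- rewrite /cw [(2 <= 1)%N]/= [(1 <= 1)%N]/= two_div_mul // addr0; exact: lexx.
- rewrite /cw [(d.+3 <= 1)%N]/= [(d.+2 <= 1)%N]/= two_div_mul // two_div_mul // addr0.
Qed.

Lemma cw_le1 d : cw d <= 1.
Proof.
rewrite /cw; case: ifP => // /negbT; rewrite -ltnNge => d1.
rewrite ler_pdivrMr ?ltr0n // mul1r ler_nat; exact: leq_trans d1 _.
Qed.

Lemma cw_lt1 d : (2 <= d)%N -> cw d < 1.
Proof.
move=> d2; rewrite /cw leqNgt d2 /=.
rewrite ltr_pdivrMr ?ltr0n // mul1r ltr_nat ltnS //.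
Qed.

Lemma cw_ge0 d : 0 <= cw d.
Proof. rewrite /cw; case: ifP => // _; exact: divr_ge0. Qed.

End Wrap2.

Section Wrap3.
Local Open Scope ring_scope.


Section Part3.
Variables (T : finType) (e : rel T).
Hypotheses (esym : symmetric e) (eirr : irreflexive e).

Definition deg (U : {set T}) (u : T) := #|[set v in U | e u v]|.
Definition Sc (U : {set T}) : rat := \sum_(u in U) cw (deg U u).
Definition bw (U : {set T}) (w : T) : rat := Sc (U :\ w) + ((deg U w <= 1)%N : nat)%:R.

Lemma deg_del (U : {set T}) (w u : T) : w \in U -> deg U u = (deg (U :\ w) u + e u w)%N.
Proof.
move=> wU; rewrite /deg (cardsD1 w [set v in U | e u v]) inE wU /= addnC.
congr (_ + _)%N; apply: eq_card => v; rewrite !inE.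
by case: (v =P w) => [->|].
Qed.

Lemma deg_le (U : {set T}) (u : T) : u \in U -> (deg U u < #|U|)%N.
Proof.
move=> uU; rewrite /deg (cardsD1 u U) uU add1n ltnS.
apply: subset_leq_card; apply/subsetP => v; rewrite !inE => /andP [vU euv].
rewrite vU andbT; apply: contraTneq euv => ->; by rewrite eirr.
Qed.

Lemma inner_sum (U : {set T}) (u : T) : u \in U ->
  \sum_(w in U | w != u) cw (deg (U :\ w) u) =
  cw (deg U u).-1 *+ deg U u + cw (deg U u) *+ (#|U| - (deg U u).+1).
Proof.
move=> uU.
rewrite (bigID (fun w => e u w)) /=.
have E1 : \sum_(w | (w \in U) && (w != u) && e u w) cw (deg (U :\ w) u) =
          \sum_(w in [set v in U | e u v]) cw (deg U u).-1.
  apply: eq_big => [w|w /andP [/andP [wU _] euw]]; first by rewrite !inE andbC andbA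
     [(e u w) && _]andbC; case: (w =P u) => [->|]; rewrite ?eirr ?andbF ?andbT.
  by rewrite (deg_del u wU) euw addn1.
have E2 : \sum_(w | (w \in U) && (w != u) && ~~ e u w) cw (deg (U :\ w) u) =
          \sum_(w in [set v in U | (v != u) && ~~ e u v]) cw (deg U u).
  apply: eq_big => [w|w /andP [/andP [wU _] euw]]; first by rewrite !inE andbA.
  by rewrite (deg_del u wU) (negbTE euw) addn0.
rewrite E1 E2 !sumr_const; congr (_ + _); congr (_ *+ _).
have := cardsD1 u U; rewrite uU add1n => ->; rewrite subSS.
have -> : (U :\ u) = [set v in U | (v != u) && ~~ e u v] :|: [set v in U | e u v].
  apply/setP => v; rewrite !inE; case: (v =P u) => [->|]; rewrite ?eirr ?andbF //=.
  by case: (e u v); rewrite ?andbT ?andbF ?orbF ?orbT //= andbT.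
rewrite cardsU disjoint_setI0 ?cards0 ?subn0 ?addnK //.
by rewrite disjoints_subset; apply/subsetP => v; rewrite !inE => /andP [-> /andP [_ ->]].
Qed.


Lemma sum_b (U : {set T}) : #|U|%:R * Sc U <= \sum_(w in U) bw U w.
Proof.
rewrite /bw big_split /= /Sc.
rewrite (exchange_big_dep (fun u => u \in U)) /=; last by move=> w u _; rewrite inE => /andP [].
rewrite -big_split /= mulr_sumr; apply: ler_sum => u uU.
have -> : \sum_(w | (w \in U) && (u \in U :\ w)) cw (deg (U :\ w) u) =
          \sum_(w in U | w != u) cw (deg (U :\ w) u).
  by apply: eq_bigl => w; rewrite !inE uU andbT eq_sym.
rewrite inner_sum // mulr_natl.
have Hm : #|U| = ((#|U| - (deg U u).+1) + (deg U u).+1)%N by rewrite subnK // deg_le.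
rewrite [in X in X <= _]Hm mulrnDr -addrA [_ + (_ + _)]addrC -addrA lerD2l addrC; exact: cw_step.
Qed.

Lemma forest0 : induced_forest e set0.
Proof. by move=> [|x c] //= /andP []; rewrite inE. Qed.

Lemma ext_step (U : {set T}) w (F : {set T}) : w \in U -> F \subset U :\ w ->
  induced_forest e F -> exists F' : {set T}, [/\ F' \subset U, induced_forest e F' &
    #|F|%:R + ((deg U w <= 1)%N : nat)%:R <= (#|F'|%:R : rat)].
Proof.
move=> wU sF fF; case: (leqP (deg U w) 1) => d.
- exists (w |: F); split.
  + apply/subsetP => x; rewrite !inE => /orP [/eqP -> //|xF].
    by move: (subsetP sF x xF); rewrite inE => /andP [].
  + apply: forest_ext => //; apply: leq_trans d; apply: subset_leq_card.
    apply/subsetP => v; rewrite !inE => /andP [vF ->]; rewrite andbT.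
    by move: (subsetP sF v vF); rewrite inE => /andP [].
  + have wF : w \notin F by apply/negP => /(subsetP sF); rewrite !inE eqxx.
    by rewrite cardsU1 wF add1n -natr1 addrC.
- exists F; split => //.
  + apply: subset_trans sF _; exact: subsetDl.
  + by rewrite addr0.
Qed.

Lemma has_U (U : {set T}) (u : T) : u \in U -> has (mem U) (index_enum T).
Proof. by move=> uU; apply/hasP; exists u => //; rewrite mem_index_enum. Qed.

Lemma KL1 (U : {set T}) : exists F : {set T},
  [/\ F \subset U, induced_forest e F & Sc U <= #|F|%:R].
Proof.
move: {2}#|U| (erefl #|U|) => n; elim: n U => [|n IH] U cU.
  exists set0; split; [exact: sub0set | exact: forest0 |].
  by move/eqP: cU; rewrite cards_eq0 => /eqP ->; rewrite /Sc big_set0 cards0.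
have H w : w \in U -> exists F : {set T},
    [/\ F \subset U, induced_forest e F & bw U w <= #|F|%:R].
  move=> wU.
  have cU' : #|U :\ w| = n by move: cU; rewrite (cardsD1 w) wU add1n => -[].
  have [F [sF fF lF]] := IH _ cU'.
  have [F' [sF' fF' lF']] := ext_step wU sF fF.
  exists F'; split => //; apply: le_trans lF'; rewrite /bw lerD2r //.
case: (boolP [exists w in U, Sc U <= bw U w]).
  case/existsP => w /andP [wU lw]; have [F [sF fF lF]] := H w wU.
  by exists F; split => //; apply: le_trans lF.
move/existsPn => Hn.
have [u0 u0U] : exists u, u \in U by apply/card_gt0P; rewrite cU.
have L1 : \sum_(w in U) bw U w < \sum_(w in U) Sc U.
  apply: ltr_sum (has_U u0U) _ => w wU; have wU2 : w \in U := wU.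
  by move: (Hn w); rewrite wU2 /= -ltNge.
rewrite sumr_const -mulr_natl in L1.
have := le_lt_trans (sum_b U) L1.
by rewrite ltxx.
Qed.

Definition hasP3 (U : {set T}) := exists a b c,
  [/\ a \in U, b \in U, c \in U, e a b & e b c] /\ (a != c) /\ ~~ e a c.

Lemma card4 (U : {set T}) a b c z : a \in U -> b \in U -> c \in U -> z \in U ->
  a != b -> a != c -> a != z -> b != c -> b != z -> c != z -> (3 < #|U|)%N.
Proof.
move=> aU bU cU zU ab ac az bc bz cz.
have u : uniq [:: a; b; c; z] by rewrite /= !inE !negb_or ab ac az bc bz cz.
have sub : [:: a; b; c; z] \subset U.
  by apply/subsetP => x; rewrite !inE => /orP [|/orP [|/orP [|]]] /eqP ->.
by apply: leq_trans (subset_leq_card sub); rewrite (card_uniqP u).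
Qed.

Lemma Sc_lt (U : {set T}) b : b \in U -> (2 <= deg U b)%N -> Sc U < #|U|%:R.
Proof.
move=> bU db; rewrite /Sc (bigD1 b) //= (cardsD1 b U) bU add1n -addn1 natrD addrC.
apply: ler_ltD; last exact: cw_lt1.
apply: le_trans (ler_sum _ (fun u _ => cw_le1 (deg U u))) _.
rewrite (eq_bigl (mem (U :\ b))) ?sumr_const //.
by move=> u; rewrite !inE andbC.
Qed.

Lemma neq_of_e x y : e x y -> x != y.
Proof. by apply: contraTneq => ->; rewrite eirr. Qed.

Lemma small_forest (U : {set T}) a b c : [/\ a \in U, b \in U, c \in U, e a b & e b c] ->
  a != c -> ~~ e a c -> (#|U| <= 3)%N -> induced_forest e U.
Proof.
move=> [aU bU cU eab ebc] ac nac cU3 c0 allc uc sc; apply/negP => cc.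
have ac0 : a \in c0.
  apply/negPn/negP => na.
  have : (size c0 <= #|U :\ a|)%N.
    rewrite cardE; apply: uniq_leq_size uc _ => x xc; rewrite mem_enum !inE.
    rewrite (allP allc x xc) andbT; by apply: contraNneq na => <-.
  move: cU3; rewrite (cardsD1 a U) aU add1n => h1 h2.
  move: sc h2 h1; lia.
have [x [y [[xc yc xy xa ya] [eax eay]]]] := cycle_nbrs esym uc sc cc ac0.
have xU := allP allc x xc; have yU := allP allc y yc.
have xc' : x != c by apply: contraNneq nac => <-.
have yc' : y != c by apply: contraNneq nac => <-.
have ab := neq_of_e eab; have bc := neq_of_e ebc.
have ax : a != x by rewrite eq_sym.
have ay : a != y by rewrite eq_sym.
have cx : c != x by rewrite eq_sym.
have cy : c != y by rewrite eq_sym.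
case: (x =P b) => [xb|/eqP xb].
  have yb : b != y by rewrite -xb.
  have := card4 aU bU cU yU ab ac ay bc yb cy.
  by rewrite ltnNge cU3.
have bx : b != x by rewrite eq_sym.
have := card4 aU bU cU xU ab ac ax bc bx cx.
by rewrite ltnNge cU3.
Qed.

Lemma step_ns (U : {set T}) w : w \in U -> exists F : {set T},
    [/\ F \subset U, induced_forest e F & bw U w <= #|F|%:R].
Proof.
move=> wU; have [F [sF fF lF]] := KL1 (U :\ w).
have [F' [sF' fF' lF']] := ext_step wU sF fF.
exists F'; split => //; apply: le_trans lF'; rewrite /bw lerD2r //.
Qed.

Lemma KL2 (U : {set T}) : hasP3 U -> exists F : {set T},
  [/\ F \subset U, induced_forest e F & Sc U < #|F|%:R].
Proof.
move: {2}#|U| (erefl #|U|) => n; elim: n U => [|n IH] U cU [a [b [c [[aU bU cU' eab ebc] [ac nac]]]]].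
  by move/eqP: cU; rewrite cards_eq0 => /eqP Ue; rewrite Ue inE in aU.
case: (leqP #|U| 3) => h.
  exists U; split => //; first exact: small_forest (And5 aU bU cU' eab ebc) ac nac h.
  apply: (Sc_lt bU); rewrite /deg.
  have sub : [set a; c] \subset [set v in U | e b v].
    by apply/subsetP => x; rewrite !inE => /orP [] /eqP ->; rewrite ?aU ?cU' ?ebc // esym eab.
  by apply: leq_trans (subset_leq_card sub); rewrite cards2 ac.
case: (boolP [exists w in U, (w != a) && (w != b) && (w != c)]); last first.
  move/existsPn => Hn.
  have sub : U \subset [:: a; b; c].
    apply/subsetP => x xU; move: (Hn x); rewrite xU /= !inE.
    by case: (x == a); case: (x == b); case: (x == c).
  by move: (leq_trans h (leq_trans (subset_leq_card sub) (card_size _))).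
case/existsP => w0 /andP [w0U /andP [/andP [w0a w0b] w0c]].
have [F' [sF' fF' lF']] : exists F' : {set T},
    [/\ F' \subset U, induced_forest e F' & bw U w0 < #|F'|%:R].
  have cU0 : #|U :\ w0| = n by move: cU; rewrite (cardsD1 w0) w0U add1n => -[].
  have P3' : hasP3 (U :\ w0).
    exists a, b, c; split => //; split; rewrite ?inE 1?eq_sym ?w0a ?w0b ?w0c //.
  have [F [sF fF lF]] := IH _ cU0 P3'.
  have [F' [sF' fF' lF']] := ext_step w0U sF fF.
  exists F'; split => //; apply: lt_le_trans lF'; rewrite /bw ltrD2r //.
case: (boolP [exists w in U, Sc U < bw U w]).
  case/existsP => w /andP [wU lw]; have [F [sF fF lF]] := step_ns wU.
  by exists F; split => //; apply: lt_le_trans lF.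
move/existsPn => Hn.
exists F'; split => //; apply: le_lt_trans lF'.
have L1 : \sum_(w in U | w != w0) bw U w <= \sum_(w in U | w != w0) Sc U.
  apply: ler_sum => w /andP [wU _]; move: (Hn w); rewrite wU /= -leNgt; exact.
have := sum_b U; rewrite (bigD1 w0) //= => L2.
have L3 := le_trans L2 (lerD (lexx (bw U w0)) L1).
move: L3; rewrite (eq_bigl (mem (U :\ w0))) ?sumr_const; last first.
  by move=> w; rewrite !inE andbC.
rewrite (cardsD1 w0 U) w0U add1n -addn1 natrD -mulr_natl.
move=> L3; lra.
Qed.

End Part3.

End Wrap3.

Section Part4.
Variables (T : finType) (e : rel T).
Hypotheses (esym : symmetric e) (eirr : irreflexive e).

Lemma sub_card (F : {set T}) k : k <= #|F| -> exists S : {set T}, S \subset F /\ #|S| = k.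
Proof.
elim: k => [|k IH] h.
  by exists set0; rewrite sub0set cards0.
have [S [sS cS]] := IH (ltnW h).
have [x /andP [xS xF]] : exists x, (x \notin S) && (x \in F).
  case: (boolP [exists x, (x \notin S) && (x \in F)]) => [/existsP //|/existsPn H].
  have : F \subset S by apply/subsetP => x xF; move: (H x); rewrite xF andbT negbK.
  by move/subset_leq_card; rewrite cS leqNgt h.
exists (x |: S); split; first by apply/subsetP => y; rewrite !inE => /orP [/eqP -> //|/(subsetP sS)].
by rewrite cardsU1 xS cS.
Qed.

Definition edgeset := [set A : {set T} | [exists x, exists y, e x y && (A == [set x; y])]].

Lemma handshake : \sum_(u : T) deg e setT u = 2 * nedges e.
Proof.
have E1 : \sum_(u : T) deg e setT u = \sum_(p : T * T | e p.1 p.2) 1.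
  rewrite -(pair_big_dep xpredT (fun u v => e u v) (fun _ _ => 1)) /=.
  apply: eq_bigr => u _; rewrite /deg -sum1_card; apply: eq_bigl => v; by rewrite !inE.
rewrite E1 (partition_big (fun p => [set p.1; p.2]) (mem edgeset)) /=; last first.
  by move=> [x y] /= exy; rewrite inE; apply/existsP; exists x; apply/existsP; exists y; rewrite exy eqxx.
rewrite /nedges -/edgeset mulnC -sum_nat_const; apply: eq_bigr => A.
rewrite inE => /existsP [x /existsP [y /andP [exy /eqP ->]]].
have xy : x != y by apply: contraTneq exy => ->; rewrite eirr.
rewrite (eq_bigl (mem [set (x, y); (y, x)])) ?sum1_card ?cards2 //.
  by rewrite xpair_eqE negb_and xy.
move=> [u v] /=; rewrite !inE !xpair_eqE.
apply/andP/idP => [[euv /eqP eq]|].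
  have : u \in [set x; y] by rewrite -eq !inE ?eqxx.
  have : v \in [set x; y] by rewrite -eq !inE ?eqxx ?orbT.
  have uv : u != v by apply: contraTneq euv => ->; rewrite eirr.
  rewrite !inE => /orP [] /eqP eu /orP [] /eqP ev; subst u v;
    rewrite ?eqxx ?andbT ?orbT //; by rewrite eqxx in uv.
move=> /orP [] /andP [/eqP -> /eqP ->]; split => //.
- by rewrite esym.
- by rewrite setUC.
Qed.

End Part4.

Section Part5.
Variables (T : finType) (e : rel T).
Hypotheses (esym : symmetric e) (eirr : irreflexive e).
Hypothesis noP3 : ~ hasP3 e setT.

Lemma etrans a b c : e a b -> e b c -> a != c -> e a c.
Proof.
move=> eab ebc ac; apply/negPn/negP => nac; apply: noP3.
by exists a, b, c; rewrite !inE.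
Qed.

Lemma path_adj p u : path e u p -> u != last u p -> e u (last u p).
Proof.
elim: p u => [|y p IH] u /=; first by rewrite eqxx.
move=> /andP [euy py] ul.
case: (y =P last y p) => [<- //|/eqP yl].
exact: etrans euy (IH y py yl) ul.
Qed.

Lemma conn_adj u v : connect e u v -> u != v -> e u v.
Proof. by move/connectP => [p pp ->]; exact: path_adj. Qed.

Lemma comp_clique x : clique e (component e x).
Proof.
move=> y z; rewrite !inE => cxy cxz yz; apply: conn_adj yz.
apply: connect_trans _ cxz; by rewrite (sym_connect_sym esym).
Qed.

Lemma comp_eq x : component e x = x |: [set v | e x v].
Proof.
apply/setP => y; rewrite !inE; apply/idP/idP.
  move=> cxy; case: (y =P x) => [//|/eqP yx]; rewrite conn_adj //; by rewrite eq_sym.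
by move/orP => [/eqP -> | /connect1 //]; exact: connect0.
Qed.

Lemma comp_card x : #|component e x| = (deg e setT x).+1.
Proof.
rewrite comp_eq cardsU1 inE eirr add1n /deg; congr _.+1.
by apply: eq_card => v; rewrite !inE.
Qed.

End Part5.

Section Wrap6.
Local Open Scope ring_scope.


Lemma prodnn (a b : nat) : 0 <= (a%:R - b%:R) * (a%:R - b%:R - 1) :> rat.
Proof.
case: (leqP a b) => h.
  have h' : a%:R <= b%:R :> rat by rewrite ler_nat.
  nra.
have h' : (b + 1)%:R <= a%:R :> rat by rewrite ler_nat addn1.
rewrite natrD in h'; nra.
Qed.

Lemma prod0 (a b : nat) : (a%:R - b%:R) * (a%:R - b%:R - 1) = 0 :> rat ->
  a = b \/ a = b.+1.
Proof.
move/eqP; rewrite mulf_eq0 => /orP [|].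
  by rewrite subr_eq0 eqr_nat => /eqP; left.
rewrite subr_eq0 subr_eq addrC natr1 eqr_nat => /eqP ->; by right.
Qed.

Definition termA (d : nat) : rat := 6 * cw d - (6 - d%:R).

Lemma termA_ge0 d : 0 <= termA d.
Proof.
rewrite /termA /cw; case: ifP => d1.
  have : d%:R >= 0 :> rat by []. lra.
have d2 : (2 <= d)%N by rewrite ltnNge d1.
have dp : 0 < (d.+1)%:R :> rat by rewrite ltr0n.
have -> : 6 * (2 / d.+1%:R) - (6 - d%:R) = (d%:R - 2%:R) * (d%:R - 2%:R - 1) / (d.+1)%:R :> rat.
  rewrite -natr1; field; rewrite addrC natr1 pnatr_eq0 //.
apply: divr_ge0; [exact: prodnn | exact: ltW].
Qed.

Lemma termA0 d : termA d = 0 -> [\/ d = 0, d = 2 | d = 3]%N.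
Proof.
rewrite /termA /cw; case: ifP => d1.
  case: d d1 => [|[|]] // _; first by constructor 1.
have d2 : (2 <= d)%N by rewrite ltnNge d1.
have dp : 0 < (d.+1)%:R :> rat by rewrite ltr0n.
have -> : 6 * (2 / d.+1%:R) - (6 - d%:R) = (d%:R - 2%:R) * (d%:R - 2%:R - 1) / (d.+1)%:R :> rat.
  rewrite -natr1; field; rewrite addrC natr1 pnatr_eq0 //.
move/eqP; rewrite mulf_eq0 invr_eq0 pnatr_eq0 orbF => /eqP /prod0 [->|->];
  [by constructor 2 | by constructor 3].
Qed.

Definition termB (k d : nat) : rat := (k * k.+1)%:R * cw d - 2 * (2 * k%:R - d%:R).

Lemma termB_ge0 k d : (4 <= k)%N -> 0 <= termB k d /\ (termB k d = 0 -> d = k.-1 \/ d = k).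
Proof.
move=> k4; rewrite /termB /cw; case: ifP => d1.
  have hk : 4%:R <= k%:R :> rat by rewrite ler_nat.
  have hd : 0 <= d%:R :> rat by [].
  have : 0 < (k * k.+1)%:R * 1 - 2 * (2 * k%:R - d%:R) :> rat.
    rewrite mulr1 natrM -natr1; nra.
  move=> h; split; first exact: ltW.
  by move=> h0; rewrite h0 ltxx in h.
have dp : 0 < (d.+1)%:R :> rat by rewrite ltr0n.
have -> : (k * k.+1)%:R * (2 / d.+1%:R) - 2 * (2 * k%:R - d%:R) =
   2 * ((k%:R - d%:R) * (k%:R - d%:R - 1)) / (d.+1)%:R :> rat.
  rewrite natrM -!natr1; field; rewrite natr1 pnatr_eq0 //.
split.
  apply: divr_ge0; last exact: ltW.
  apply: mulr_ge0 => //; exact: prodnn.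
move/eqP; rewrite mulf_eq0 invr_eq0 pnatr_eq0 orbF mulf_eq0 pnatr_eq0 /= => /eqP /prod0 [->|->].
  by right.
by left.
Qed.



End Wrap6.

Lemma g_small n t : n < 2 * t -> g n t = 0.
Proof. by case: n => [|m] //= ->. Qed.

Lemma g_mid n t : 1 <= t -> 2 * t <= n <= 4 * t -> g n t = 3 * (n - 2 * t).
Proof.
case: n => [|m] t1 /andP [h1 h2]; first by lia.
by rewrite /= ltnNge h1 /= h2.
Qed.

Lemma g_step n t : 1 <= t -> 4 * t <= n -> g n.+1 t = g n t + n %/ t.
Proof.
move=> t1 h; rewrite [g n.+1 t]/= ltnNge (leq_trans _ (leqW h)) /=; last by lia.
rewrite leqNgt ltnS h /=; congr (_ + _).
have -> : n.+1 + t - 1 = 1 * t + n by lia.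
by rewrite divnMDl // addKn.
Qed.

Lemma g_big n t : 1 <= t -> 4 * t <= n ->
  2 * g n t + (n %/ t) * (n %/ t).+1 * t = 2 * (n %/ t) * n.
Proof.
move=> t1; elim: n => [|n IH] h; first by lia.
case: (ltngtP (4 * t) n.+1) => [hlt|hgt|heq]; [ | by lia | ]; last first.
  rewrite g_mid //; last by rewrite -heq leqnn andbT; lia.
  rewrite -heq mulnK //; lia.
have h' : 4 * t <= n by lia.
rewrite g_step //.
have IH' := IH h'.
have [[k r] /= n_eq r_lt] : exists2 kr : nat * nat, n = kr.1 * t + kr.2 & kr.2 < t.
  by exists (n %/ t, n %% t); [exact: divn_eq | exact: ltn_pmod].
have nk : n %/ t = k by rewrite n_eq divnMDl // divn_small // addn0.
rewrite nk in IH' *.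
case: (ltngtP r.+1 t) => [rt|rt|rt]; [|by lia|].
- have -> : n.+1 %/ t = k by rewrite n_eq -addnS divnMDl // divn_small // addn0.
  rewrite n_eq in IH' *; nia.
- have -> : n.+1 %/ t = k.+1 by rewrite n_eq -addnS rt -mulSnr mulnK.
  rewrite n_eq -rt in IH' *; nia.
Qed.



Section Iso.
Variables (T : finType) (e : rel T) (t : nat).
Hypotheses (esym : symmetric e) (eirr : irreflexive e).
Hypothesis noP3 : ~ hasP3 e setT.
Hypothesis t1 : 1 <= t.
Let n := #|T|.
Let k := n %/ t.
Hypothesis k4 : 4 <= k.
Hypothesis degk : forall u, deg e setT u = k.-1 \/ deg e setT u = k.
Hypothesis Sc2t : Sc e setT = ((2 * t)%:R)%R.

Let comp := component e.

Lemma comp_same x y : connect e x y -> comp x = comp y.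
Proof.
move=> cxy; apply/setP => z; rewrite !inE; apply/idP/idP => h.
  apply: connect_trans h; by rewrite (sym_connect_sym esym).
exact: connect_trans cxy h.
Qed.

Lemma comp_eqb x y : (comp x == comp y) = connect e x y.
Proof.
apply/eqP/idP => [h|]; last exact: comp_same.
have : y \in comp y by rewrite inE connect0.
by rewrite -h inE.
Qed.

Lemma mem_comp x y : (y \in comp x) = connect e x y.
Proof. by rewrite inE. Qed.

Definition P := [set comp x | x : T].

Lemma trivP : trivIset P.
Proof.
apply/trivIsetP => A B /imsetP [x _ ->] /imsetP [y _ ->] neq.
rewrite -setI_eq0; apply/eqP/setP => z; rewrite !inE.
apply/negP => /andP [cxz cyz]; move/negP: neq; apply.
rewrite comp_eqb; apply: connect_trans cxz _; by rewrite (sym_connect_sym esym).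
Qed.

Lemma coverP : cover P = setT.
Proof.
apply/setP => z; rewrite inE; apply/bigcupP; exists (comp z).
  by apply/imsetP; exists z.
by rewrite inE connect0.
Qed.

Lemma comp_size x : #|comp x| = k \/ #|comp x| = k.+1.
Proof.
rewrite /comp (comp_card eirr noP3); case: (degk x) => ->; last by right.
by left; rewrite prednK //; lia.
Qed.

Lemma nP : #|P| = t.
Proof.
have : Sc e setT = ((2 * #|P|)%:R)%R.
  rewrite /Sc (_ : (\sum_(u in [set: T]) cw (deg e setT u) =
     \sum_(u in cover P) cw (deg e setT u))%R); last by rewrite coverP.
  rewrite big_trivIset /=; last exact: trivP.
  rewrite natrM mulr_natr -sumr_const; apply: eq_bigr => A /imsetP [x _ ->].
  have Hc y : y \in comp x -> cw (deg e setT y) = (2 / (#|comp x|)%:R)%R.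
    move=> yx; have cxy : connect e x y by rewrite -mem_comp.
    rewrite (comp_same cxy) /comp (comp_card eirr noP3).
    rewrite /cw; case: ifP => // d1.
    have := comp_size y; rewrite /comp (comp_card eirr noP3); lia.
  rewrite (eq_bigr _ Hc) sumr_const.
  rewrite two_div_mul //.
  apply/card_gt0P; exists x; by rewrite inE connect0.
rewrite Sc2t => /eqP; rewrite eqr_nat eqn_pmul2l // => /eqP //.
Qed.

Definition Pb := [set A in P | #|A| == k.+1].

Lemma PbP : Pb \subset P.
Proof. by apply/subsetP => A; rewrite inE => /andP []. Qed.

Lemma nPb : #|Pb| = n %% t.
Proof.
have H : n = \sum_(A in P) #|A| by move/eqP: trivP => ->; rewrite coverP cardsT.
have H2 : \sum_(A in P) #|A| = \sum_(A in P) (if A \in Pb then k.+1 else k).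
  apply: eq_bigr => A /[dup] AP /imsetP [x _ eA]; rewrite inE AP /= eA.
  by case: (comp_size x) => ->; rewrite ?eqxx // (ltn_eqF (ltnSn k)).
rewrite H2 (bigID (mem Pb)) /= in H.
have E1 : \sum_(i in P | i \notin Pb) (if i \in Pb then k.+1 else k) = \sum_(i in P :\: Pb) k.
  apply: eq_big => [i|i]; [by rewrite [in RHS]inE andbC | by move=> /andP [_ /negbTE ->]].
have E2 : \sum_(i in P | i \in Pb) (if i \in Pb then k.+1 else k) = \sum_(i in Pb) k.+1.
  apply: eq_big => [i|i]; last by move=> /andP [_ ->].
  by rewrite /= andb_idl // => /(subsetP PbP).
rewrite E1 E2 in H.
rewrite !sum_nat_const cardsDS ?PbP // nP in H.
have Pbt : #|Pb| <= t by rewrite -nP; exact: subset_leq_card PbP.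
have : n = k * t + #|Pb| by rewrite {1}H; nia.
move=> ->; rewrite modnMDl modn_small //.
have : #|Pb| <> t.
  move=> eqt; have en : n = (k + 1) * t by rewrite {1}H eqt; nia.
  have kdef : k = n %/ t := erefl.
  have : n %/ t = k + 1 by rewrite {1}en mulnK.
  lia.
lia.
Qed.

Definition L := enum Pb ++ enum (P :\: Pb).

Lemma sizeL : size L = t.
Proof. by rewrite size_cat -!cardE cardsDS ?PbP // nP subnKC // -nP subset_leq_card // PbP. Qed.

Lemma compP x : comp x \in P.
Proof. by apply/imsetP; exists x. Qed.

Lemma compL x : comp x \in L.
Proof.
rewrite mem_cat !mem_enum; case: (boolP (comp x \in Pb)) => //= h.
by rewrite in_setD h compP.
Qed.

Definition pi x := index (comp x) L.
Definition rho x := index x (enum (comp x)).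

Lemma pi_lt x : pi x < t.
Proof. by rewrite -sizeL index_mem compL. Qed.

Lemma rho_lt x : rho x < #|comp x|.
Proof. by rewrite cardE index_mem mem_enum inE connect0. Qed.

Lemma pi_big x : #|comp x| = k.+1 -> pi x < n %% t.
Proof.
move=> h; rewrite -nPb /pi /L index_cat.
have cP : comp x \in enum Pb by rewrite mem_enum inE compP h eqxx.
by rewrite cP cardE index_mem.
Qed.

Definition fx x := pi x + t * rho x.

Lemma fx_lt x : fx x < n.
Proof.
have nE : n = k * t + n %% t := divn_eq n t.
have := rho_lt x; have := pi_lt x; rewrite /fx.
case: (comp_size x) => [h|h]; rewrite h.
  move=> h1 h2; have h3 : t * rho x <= t * k.-1 by rewrite leq_mul2l; apply/orP; right; lia.
  have h4 : t * k.-1 + t = t * k by rewrite -mulnSr prednK //; lia.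
  lia.
move=> _ h2; have h1 := pi_big h.
have h3 : t * rho x <= t * k by rewrite leq_mul2l; apply/orP; right; lia.
lia.
Qed.

Lemma fx_mod x : fx x %% t = pi x.
Proof. by rewrite /fx addnC mulnC modnMDl modn_small // pi_lt. Qed.

Lemma fx_div x : fx x %/ t = rho x.
Proof. by rewrite /fx addnC mulnC divnMDl // divn_small ?pi_lt // addn0. Qed.

Lemma pi_inj x y : pi x = pi y -> comp x = comp y.
Proof.
move=> h; rewrite -(nth_index set0 (compL x)) -(nth_index set0 (compL y)).
by rewrite -/(pi x) -/(pi y) h.
Qed.

Lemma fx_inj : injective fx.
Proof.
move=> x y h.
have hp : pi x = pi y by rewrite -fx_mod h fx_mod.
have hr : rho x = rho y by rewrite -fx_div h fx_div.
have hc := pi_inj hp.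
have xc : x \in enum (comp y) by rewrite -hc mem_enum inE connect0.
have yc : y \in enum (comp y) by rewrite mem_enum inE connect0.
have hi : index x (enum (comp y)) = index y (enum (comp y)) by move: hr; rewrite /rho hc.
exact: (index_inj x xc yc hi).
Qed.

Lemma iso_main : graph_iso e (Gnt n t).
Proof.
exists (fun x => Ordinal (fx_lt x)); split.
  apply: inj_card_bij; last by rewrite card_ord.
  by move=> x y /(congr1 val) /= /fx_inj.
move=> x y; rewrite /Gnt /= fx_mod fx_mod.
have -> : (Ordinal (fx_lt x) != Ordinal (fx_lt y)) = (x != y).
  apply/idP/idP.
    by apply: contraNN => /eqP ->.
  by apply: contraNN => /eqP h; apply/eqP; apply: fx_inj; exact: (congr1 val h).
have -> : (pi x == pi y) = connect e x y.
  rewrite -comp_eqb; apply/eqP/eqP => [/pi_inj //|h]; by rewrite /pi h.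
apply/idP/andP => [exy|[xy cxy]].
  split; first by apply: contraTneq exy => ->; rewrite eirr.
  exact: connect1.
exact: (conn_adj noP3).
Qed.

End Iso.

Lemma sum_lin (T : finType) (F : T -> nat) (x y z : rat) :
  (\sum_(u : T) (x * cw (F u) - y * (z - (F u)%:R)) =
   x * \sum_(u : T) cw (F u) - y * (z * #|T|%:R - (\sum_(u : T) F u)%:R))%R.
Proof.
rewrite sumrB -!mulr_sumr sumrB natr_sum sumr_const -[(z *+ _)%R]mulr_natr.
by [].
Qed.

Lemma ScE (T : finType) (e : rel T) : Sc e setT = (\sum_(u : T) cw (deg e setT u))%R.
Proof. by rewrite /Sc; apply: eq_bigl => u; rewrite in_setT. Qed.

Lemma deg0_noP3 (T : finType) (e : rel T) :
  (forall u, deg e setT u = 0) -> ~ hasP3 e setT.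
Proof.
move=> H [a [b [c [[_ _ _ eab _] _]]]].
have : 0 < deg e setT a by apply/card_gt0P; exists b; rewrite !inE eab.
by rewrite H.
Qed.

Theorem theorem4p1 (T : finType) (e : rel T) (t : nat) :
  symmetric e -> irreflexive e ->
  1 <= #|T| -> 1 <= t ->
  ~ has_induced_forest e (2 * t + 1) ->
  g #|T| t <= nedges e /\
  (nedges e = g #|T| t -> #|T| < 4 * t ->
     forall x : T, clique e (component e x) /\
       (#|component e x| = 1 \/ #|component e x| = 3 \/ #|component e x| = 4)) /\
  (nedges e = g #|T| t -> 4 * t <= #|T| -> graph_iso e (Gnt #|T| t)).
Proof.
move=> esym eirr n1 t1 noF.
have Fb : forall F, induced_forest e F -> #|F| <= 2 * t.
  move=> F fF; rewrite leqNgt; apply/negP => h; apply: noF.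
  have [S [sS cS]] := sub_card h.
  by exists S; split; [rewrite cS addn1 | exact: forest_sub sS fF].
have ScB : (Sc e setT <= (2 * t)%:R)%R.
  have [F [_ fF lF]] := KL1 esym eirr setT.
  apply: le_trans lF _; rewrite ler_nat; exact: Fb.
have ScP3 : hasP3 e setT -> (Sc e setT < (2 * t)%:R)%R.
  move=> h; have [F [_ fF lF]] := KL2 esym eirr h.
  apply: lt_le_trans lF _; rewrite ler_nat; exact: Fb.
have HS := handshake esym eirr.
set n := #|T| in n1 Fb *.
set D := \sum_(u : T) deg e setT u in HS.
set d := deg e setT in D HS.
have structure : (forall u, [\/ d u = 0, d u = 2 | d u = 3]) -> ~ hasP3 e setT ->
    forall x : T, clique e (component e x) /\
       (#|component e x| = 1 \/ #|component e x| = 3 \/ #|component e x| = 4).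
  move=> Hd nP x; split; first exact: comp_clique esym nP x.
  rewrite (comp_card eirr nP); case: (Hd x); rewrite /d => ->; by [left | right; left | right; right].
case: (ltnP n (2 * t)) => h1.
  rewrite g_small //; split => //; split; last by move=> _ h; lia.
  move=> E0 _.
  have Hd0 : forall u, d u = 0.
    move=> u; have : D == 0 by rewrite HS E0.
    by rewrite /D sum_nat_eq0 => /forallP /(_ u) /eqP.
  apply: structure; first by move=> u; rewrite Hd0; constructor 1.
  exact: deg0_noP3.
case: (ltnP n (4 * t)) => h2.
  have gE : g n t = 3 * (n - 2 * t) by rewrite g_mid // h1 ltnW.
  have SA : (\sum_(u : T) termA (d u) = 6 * Sc e setT - 1 * (6 * n%:R - D%:R))%R.
    rewrite ScE -sum_lin; apply: eq_bigr => u _; by rewrite /termA mul1r.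
  have SA0 : (0 <= \sum_(u : T) termA (d u))%R by apply: sumr_ge0 => u _; exact: termA_ge0.
  have key : 6 * (n - 2 * t) <= D.
    have : ((6 * n)%:R <= (D + 12 * t)%:R :> rat)%R.
      rewrite natrD !natrM -/n; rewrite natrM in ScB; lra.
    rewrite ler_nat; lia.
  rewrite gE; split; first by lia.
  split; last by move=> _ h; lia.
  move=> Eq _.
  have DE : D = 6 * (n - 2 * t) by lia.
  have SA1 : (\sum_(u : T) termA (d u) <= 0)%R.
    rewrite SA; have : (D%:R = 6 * n%:R - 12 * t%:R :> rat)%R.
      by rewrite DE natrM natrB; [rewrite natrM; ring | lia].
    rewrite natrM in ScB; lra.
  have Hz : forall u, termA (d u) = 0%R.
    have : (\sum_(u : T) termA (d u) == 0)%R by rewrite eq_le SA1 SA0.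
    move/eqP/(psumr_eq0P (fun u _ => termA_ge0 (d u))) => H u; exact: H.
  apply: structure; first by move=> u; exact: termA0 (Hz u).
  move=> hP; have := ScP3 hP.
  have : (D%:R = 6 * n%:R - 12 * t%:R :> rat)%R.
    by rewrite DE natrM natrB; [rewrite natrM; ring | lia].
  move: SA0; rewrite SA natrM; lra.
set k := n %/ t.
have k4 : 4 <= k.
  have : (4 * t) %/ t <= k by exact: leq_div2r.
  by rewrite mulnK.
have gB := g_big t1 h2; rewrite -/k in gB.
have SB : (\sum_(u : T) termB k (d u) =
   (k * k.+1)%:R * Sc e setT - 2 * (2 * k%:R * n%:R - D%:R))%R.
  rewrite ScE -sum_lin; apply: eq_bigr => u _; by rewrite /termB.
have SB0 : (0 <= \sum_(u : T) termB k (d u))%R.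
  by apply: sumr_ge0 => u _; case: (termB_ge0 (d u) k4).
have key : 2 * g n t <= D.
  have : ((2 * k * n)%:R <= (D + k * k.+1 * t)%:R :> rat)%R.
    have hk : (0 <= (k * k.+1)%:R :> rat)%R by [].
    move: SB0; rewrite SB natrD !natrM -/n; rewrite natrM in ScB.
    rewrite natrM in hk; nra.
  rewrite ler_nat; lia.
split; first by lia.
split; first by move=> _ h; lia.
move=> Eq _.
have DE : D = 2 * g n t by lia.
have DR : (D%:R = 2 * k%:R * n%:R - (k * k.+1 * t)%:R :> rat)%R.
  have : ((D + k * k.+1 * t)%:R = (2 * k * n)%:R :> rat)%R by rewrite DE gB.
  rewrite natrD !natrM; move=> h; lra.
have SB1 : (\sum_(u : T) termB k (d u) <= 0)%R.
  rewrite SB DR natrM in ScB *; rewrite !natrM.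
  have hk : (0 <= k%:R * k.+1%:R :> rat)%R by apply: mulr_ge0.
  nra.
have Hz : forall u, termB k (d u) = 0%R.
  have : (\sum_(u : T) termB k (d u) == 0)%R by rewrite eq_le SB1 SB0.
  move/eqP/(psumr_eq0P (fun u _ => (termB_ge0 (d u) k4).1)) => H u; exact: H.
have noP3 : ~ hasP3 e setT.
  move=> hP; have := ScP3 hP.
  have : (0 < k%:R * k.+1%:R :> rat)%R by rewrite -natrM ltr0n muln_gt0; lia.
  move: SB0; rewrite SB DR natrM !natrM; nra.
have degk : forall u, deg e setT u = k.-1 \/ deg e setT u = k.
  move=> u; exact: (termB_ge0 (d u) k4).2 (Hz u).
have Sc2t : Sc e setT = ((2 * t)%:R)%R.
  have hs : (\sum_(u : T) termB k (d u) = 0)%R by apply: big1 => u _; exact: Hz.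
  move: hs; rewrite SB DR !natrM => hs.
  have : (0 < k%:R * k.+1%:R :> rat)%R by rewrite -natrM ltr0n muln_gt0; lia.
  move=> hp; apply/eqP; rewrite eq_le; apply/andP; split; first by rewrite natrM in ScB.
  nra.
exact: iso_main esym eirr noP3 t1 k4 degk Sc2t.
Qed.
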